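(* Let $C$ be a strongly connected component of $G$. If at least one vertex of $C$ has out-degree greater than one within $C$, then $\psi$ restricted to $\Delta_C$ is chaotic. If every vertex of $C$ has out-degree exactly one within $C$, then $\Delta_C$ is a single periodic orbit of $\psi$.
   Context: $G$ is a finite directed graph (loops allowed) with vertex set $V$. $\Omega$ is the set of bi-infinite paths in $G$, i.e. sequences $(x_i)_{i\in\mathbb Z}\in V^{\mathbb Z}$ such that for every $i$ there is an edge from $x_i$ to $x_{i+1}$. Fix $h>0$. $\bar\Delta$ is the set of functions $x:\mathbb R\to V$ that are constant on each interval $[nh,(n+1)h)$, $n\in\mathbb Z$, and satisfy $(x(ih))_{i\in\mathbb Z}\in\Omega$. $\Delta=\{x(\cdot+t): x\in\bar\Delta,\ t\in\mathbb R\}$, with metric $d(x,y)=\sum_{i\in\mathbb Z}4^{-|i|}\frac1h\int_{ih}^{(i+1)h}\delta(x,y,t)\,dt$, where $\delta(x,y,t)=1$ if $x(t)\ne y(t)$ and $0$ otherwise. The flow $\psi:\mathbb R\times\Delta\to\Delta$ is $\psi(t,x)=x(\cdot+t)$. A strongly connected component of $G$ is a maximal nonempty set $C\subseteq V$ such that for all $u,v\in C$ (including $u=v$) there is a directed path of positive length from $u$ to $v$ with all vertices in $C$. The lift of $C$ is $\Delta_C=\{f\in\Delta: f(t)\in C \text{ for all } t\in\mathbb R\}$. A flow on a metric space $X$ is chaotic if (i) it has sensitive dependence on initial conditions (there is $\delta>0$ such that for every $x\in X$ and every neighborhood $B$ of $x$ there are $y\in B$, $t>0$ with $d(\Phi_t(x),\Phi_t(y))>\delta$),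 (ii) its periodic points are dense in $X$, and (iii) it is topologically transitive (there is $x\in X$ with $\omega(x)=X$, where $\omega(x)$ is the set of limits of $\Phi_{t_k}(x)$ along sequences $t_k\to+\infty$). *)

(* Defs.v *)
From Stdlib Require Import Bool Reals Lra List ZArith Classical ClassicalEpsilon FunctionalExtensionality.
Open Scope R_scope.

Section Graph.
Variable V : Type.
Variable E : V -> V -> bool.

Inductive reach_in (C : V -> bool) : V -> V -> Prop :=
| reach_step : forall u v, C u = true -> C v = true -> E u v = true -> reach_in C u v
| reach_cons : forall u w v, C u = true -> E u w = true -> reach_in C w v -> reach_in C u v.

Definition strongly_connected_set (C : V -> bool) : Prop :=
  (exists v, C v = true) /\
  (forall u v, C u = true -> C v = true -> reach_in C u v).

Definition is_SCC (C : V -> bool) : Prop :=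
  strongly_connected_set C /\
  (forall D : V -> bool, strongly_connected_set D ->
     (forall v, C v = true -> D v = true) -> forall v, D v = true -> C v = true).

(* out-degree of v within C, counted over an exhaustive duplicate-free enumeration *)
Definition outdeg_in (enum : list V) (C : V -> bool) (v : V) : nat :=
  length (filter (fun w => C w && E v w) enum).

Definition in_Delta_bar (h : R) (x : R -> V) : Prop :=
  (forall (n : Z) (t : R), IZR n * h <= t < (IZR n + 1) * h -> x t = x (IZR n * h)) /\
  (forall i : Z, E (x (IZR i * h)) (x ((IZR i + 1) * h)) = true).

Definition in_Delta (h : R) (f : R -> V) : Prop :=
  exists x t, in_Delta_bar h x /\ f = (fun s => x (s + t)).

Definition in_Delta_C (h : R) (C : V -> bool) (f : R -> V) : Prop :=
  in_Delta h f /\ forall t, C (f t) = true.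
End Graph.

Definition psi {V : Type} (t : R) (x : R -> V) : R -> V := fun s => x (s + t).

Definition delta {V : Type} (x y : R -> V) (t : R) : R :=
  if excluded_middle_informative (x t = y t) then 0 else 1.

(* Riemann integral of f over [a,b] (the value is unique when f is integrable;
   all integrands used below are integrable step functions) *)
Definition RInt (f : R -> R) (a b : R) : R :=
  epsilon (inhabits 0) (fun v => exists pr : Riemann_integrable f a b, RiemannInt pr = v).

(* value of a bi-infinite sum  sum_{i in Z} w i, as the limit of symmetric partial sums *)
Definition Zsum (w : Z -> R) : R :=
  epsilon (inhabits 0)
    (fun l => Un_cv (fun N => sum_f_R0 (fun n => if Nat.eqb n 0 then w 0%Z
                                               else w (Z.of_nat n) + w (- Z.of_nat n)%Z) N) l).

Definition dmetric {V : Type} (h : R) (x y : R -> V) : R :=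
  Zsum (fun i => (/ 4) ^ Z.to_nat (Z.abs i) *
                 (/ h * RInt (delta x y) (IZR i * h) ((IZR i + 1) * h))).

Definition sensitive {P : Type} (X : P -> Prop) (d : P -> P -> R) (Phi : R -> P -> P) : Prop :=
  exists dl, dl > 0 /\
    forall x, X x -> forall eps, eps > 0 ->
      exists y t, X y /\ d x y < eps /\ t > 0 /\ d (Phi t x) (Phi t y) > dl.

Definition periodic_point {P : Type} (Phi : R -> P -> P) (p : P) : Prop :=
  exists T, T > 0 /\ Phi T p = p.

Definition dense_periodic {P : Type} (X : P -> Prop) (d : P -> P -> R) (Phi : R -> P -> P) : Prop :=
  forall x, X x -> forall eps, eps > 0 ->
    exists p, X p /\ periodic_point Phi p /\ d x p < eps.

Definition omega_limit {P : Type} (X : P -> Prop) (d : P -> P -> R) (Phi : R -> P -> P)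
  (x : P) (y : P) : Prop :=
  X y /\ exists tk : nat -> R, cv_infty tk /\ Un_cv (fun k => d (Phi (tk k) x) y) 0.

Definition top_transitive {P : Type} (X : P -> Prop) (d : P -> P -> R) (Phi : R -> P -> P) : Prop :=
  exists x, X x /\ forall y, omega_limit X d Phi x y <-> X y.

Definition chaotic {P : Type} (X : P -> Prop) (d : P -> P -> R) (Phi : R -> P -> P) : Prop :=
  sensitive X d Phi /\ dense_periodic X d Phi /\ top_transitive X d Phi.

(* Main.v *)
Require Import Defs.
From Stdlib Require Import Reals List ZArith.
Open Scope R_scope.
From Stdlib Require Import Lra Lia ClassicalEpsilon FunctionalExtensionality Classical.
From Coquelicot Require Coquelicot.


Definition fl (r : R) : Z := (up r - 1)%Z.

Lemma fl_spec r : IZR (fl r) <= r < IZR (fl r) + 1.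
Proof. unfold fl. destruct (archimed r) as [H1 H2]. rewrite minus_IZR.
  change (IZR 1) with 1. lra. Qed.

Lemma fl_unique n r : IZR n <= r < IZR n + 1 -> fl r = n.
Proof. intros [H1 H2]. unfold fl. rewrite <- (tech_up r (n+1)); [lia| |];
  rewrite plus_IZR; change (IZR 1) with 1; lra. Qed.

Lemma fl_shift r n : fl (r + IZR n) = (fl r + n)%Z.
Proof. apply fl_unique. rewrite plus_IZR. pose proof (fl_spec r). lra. Qed.

Definition rep {V : Type} (h : R) (a : Z -> V) (s : R) : R -> V :=
  fun u => a (fl ((u + s) / h)).

Lemma rep_val {V} h (a : Z -> V) s k u : h > 0 ->
  IZR k * h - s <= u < (IZR k + 1) * h - s -> rep h a s u = a k.
Proof. intros Hh Hu. unfold rep. f_equal. apply fl_unique.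
  split; [apply Rmult_le_reg_r with h; [lra|]| apply Rmult_lt_reg_r with h; [lra|]];
  unfold Rdiv; rewrite Rmult_assoc, Rinv_l; lra. Qed.

Lemma psi_rep {V} h (a : Z -> V) s t : psi t (rep h a s) = rep h a (s + t).
Proof. unfold psi, rep. apply functional_extensionality. intro u.
  f_equal. f_equal. f_equal. ring. Qed.

Definition const_on {T} (F : R -> T) p q := exists v, forall x, p < x < q -> F x = v.

Lemma const_on_sub {T} (F : R -> T) p q p' q' : p <= p' -> q' <= q ->
  const_on F p q -> const_on F p' q'.
Proof. intros H1 H2 [v Hv]. exists v. intros x Hx. apply Hv. lra. Qed.

Lemma delta_const {V} (f g : R -> V) p q :
  const_on f p q -> const_on g p q -> const_on (delta f g) p q.
Proof. intros [vf Hf] [vg Hg]. exists (delta (fun _ => vf) (fun _ => vg) 0).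
  intros x Hx. unfold delta. rewrite (Hf x Hx), (Hg x Hx). reflexivity. Qed.

Lemma rep_break {V} h (a : Z -> V) s A : h > 0 ->
  exists c, A < c <= A + h /\ const_on (rep h a s) A c /\ const_on (rep h a s) c (A+h).
Proof. intro Hh. set (r := (A + s) / h). set (k := fl r).
  assert (Er : A + s = r * h) by (unfold r; field; lra).
  pose proof (fl_spec r) as [K1 K2]. fold k in K1, K2.
  assert (P1 : IZR k * h <= r * h) by (apply Rmult_le_compat_r; lra).
  assert (P2 : r * h < (IZR k + 1) * h) by (apply Rmult_lt_compat_r; lra).
  exists ((IZR k + 1) * h - s). split; [lra|]. split.
  - exists (a k). intros x Hx. apply rep_val; lra.
  - exists (a (k+1)%Z). intros x Hx. apply rep_val; [lra|]. rewrite plus_IZR.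
    change (IZR 1) with 1. lra.
Qed.

Module Met.
Import Coquelicot.Coquelicot.

Lemma const_ex (F : R -> R) p q : p <= q -> const_on F p q -> ex_RInt F p q.
Proof. intros Hpq [v Hv]. apply ex_RInt_ext with (fun _ => v).
  - intros x Hx. rewrite Rmin_left, Rmax_right in Hx by lra. symmetry. apply Hv. lra.
  - apply ex_RInt_const. Qed.

Lemma rep_ex {V} h (a b : Z -> V) s s' A : h > 0 ->
  ex_RInt (delta (rep h a s) (rep h b s')) A (A + h).
Proof. intro Hh.
  destruct (rep_break h a s A Hh) as [c1 [Hc1 [F1 F2]]].
  destruct (rep_break h b s' A Hh) as [c2 [Hc2 [G1 G2]]].
  destruct (Rle_dec c1 c2) as [Hle|Hle].
  - apply ex_RInt_Chasles with c1; [|apply ex_RInt_Chasles with c2].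
    + apply const_ex; [lra|]. apply delta_const; auto.
      apply const_on_sub with A c2; auto; lra.
    + apply const_ex; [lra|]. apply delta_const.
      apply const_on_sub with c1 (A+h); auto; lra.
      apply const_on_sub with A c2; auto; lra.
    + apply const_ex; [lra|]. apply delta_const; auto.
      apply const_on_sub with c1 (A+h); auto; lra.
  - apply ex_RInt_Chasles with c2; [|apply ex_RInt_Chasles with c1].
    + apply const_ex; [lra|]. apply delta_const; auto.
      apply const_on_sub with A c1; auto; lra.
    + apply const_ex; [lra|]. apply delta_const.
      apply const_on_sub with A c1; auto; lra.
      apply const_on_sub with c2 (A+h); auto; lra.
    + apply const_ex; [lra|]. apply delta_const; auto.
      apply const_on_sub with c2 (A+h); auto; lra.
Qed.

Lemma RInt_eq (F : R -> R) A B : ex_RInt F A B -> Defs.RInt F A B = RInt F A B.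
Proof. intro HF. unfold Defs.RInt.
  assert (Hex : exists v, exists pr : Riemann_integrable F A B, RiemannInt pr = v).
  { exists (RiemannInt (ex_RInt_Reals_0 _ _ _ HF)). eexists. reflexivity. }
  destruct (epsilon_spec (inhabits 0) _ Hex) as [pr Hpr]. rewrite <- Hpr.
  symmetry. apply RInt_Reals. Qed.

Lemma delta_01 {V} (f g : R -> V) x : 0 <= delta f g x <= 1.
Proof. unfold delta. destruct excluded_middle_informative; lra. Qed.

Lemma int_bounds {V} (f g : R -> V) A B : A <= B -> ex_RInt (delta f g) A B ->
  0 <= Defs.RInt (delta f g) A B <= B - A.
Proof. intros HAB Hex. rewrite RInt_eq by auto. split.
  - replace 0 with (RInt (fun _ => 0) A B).
    + apply RInt_le; auto. apply ex_RInt_const. intros x _. apply delta_01.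
    + rewrite RInt_const. unfold scal; simpl; unfold mult; simpl. ring.
  - replace (B - A) with (RInt (fun _ => 1) A B).
    + apply RInt_le; auto. apply ex_RInt_const. intros x _. apply delta_01.
    + rewrite RInt_const. unfold scal; simpl; unfold mult; simpl. ring.
Qed.

Lemma int_zero {V} (f g : R -> V) A B : A <= B -> ex_RInt (delta f g) A B ->
  (forall x, A <= x <= B -> f x = g x) -> Defs.RInt (delta f g) A B = 0.
Proof. intros HAB Hex Heq. rewrite RInt_eq by auto.
  rewrite (RInt_ext _ (fun _ => 0)).
  - rewrite RInt_const. unfold scal; simpl; unfold mult; simpl. ring.
  - intros x Hx. rewrite Rmin_left, Rmax_right in Hx by lra. unfold delta.
    destruct excluded_middle_informative as [|n]; auto. exfalso; apply n, Heq; lra.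
Qed.

Lemma int_full {V} (f g : R -> V) A B : A <= B -> ex_RInt (delta f g) A B ->
  (forall x, A < x < B -> f x <> g x) -> Defs.RInt (delta f g) A B = B - A.
Proof. intros HAB Hex Heq. rewrite RInt_eq by auto.
  rewrite (RInt_ext _ (fun _ => 1)).
  - rewrite RInt_const. unfold scal; simpl; unfold mult; simpl. ring.
  - intros x Hx. rewrite Rmin_left, Rmax_right in Hx by lra. unfold delta.
    destruct excluded_middle_informative as [e|n]; auto. exfalso; apply (Heq x); auto; lra.
Qed.

End Met.

Definition tz (w : Z -> R) (n : nat) : R :=
  if Nat.eqb n 0 then w 0%Z else w (Z.of_nat n) + w (- Z.of_nat n)%Z.

Lemma geo_bound M (t : nat -> R) : (forall n, 0 <= t n <= 2 * (/2)^n) ->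
  (forall n, (n < M)%nat -> t n = 0) ->
  forall N, ((N < M)%nat -> sum_f_R0 t N = 0) /\
            ((M <= S N)%nat -> sum_f_R0 t N <= 4 * (/2)^M - 4 * (/2)^(S N)).
Proof. intros Ht Hz. induction N as [|N IH].
  - simpl. split; intro H.
    + apply Hz; auto.
    + destruct M as [|M].
      * simpl. specialize (Ht 0%nat). simpl in Ht. lra.
      * assert (M = 0%nat) by lia. subst. rewrite Hz by lia. simpl. lra.
  - destruct IH as [IH1 IH2]. simpl sum_f_R0. split; intro H.
    + rewrite IH1 by lia. rewrite Hz by lia. lra.
    + assert (Hp : (/2)^(S (S N)) = (/2)^(S N) * /2) by (simpl; ring).
      destruct (Nat.eq_dec M (S (S N))) as [E|E].
      * rewrite IH1 by lia. rewrite Hz by lia. subst M. lra.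
      * specialize (IH2 ltac:(lia)). specialize (Ht (S N)). lra.
Qed.

Lemma tz_growing w : (forall n, 0 <= tz w n <= 2 * (/2)^n) ->
  Un_growing (fun N => sum_f_R0 (tz w) N).
Proof. intros Ht n. simpl. specialize (Ht (S n)). lra. Qed.

Lemma Zsum_cv w : (forall n, 0 <= tz w n <= 2 * (/2)^n) ->
  Un_cv (fun N => sum_f_R0 (tz w) N) (Zsum w).
Proof. intro Ht.
  assert (Hub : has_ub (fun N => sum_f_R0 (tz w) N)).
  { exists 4. intros x [N ->]. destruct (geo_bound 0 (tz w) Ht ltac:(intros; exfalso; lia) N) as [_ H].
    specialize (H ltac:(lia)). pose proof (pow_lt (/2) (S N) ltac:(lra)). simpl pow in H at 1. lra. }
  destruct (growing_cv _ (tz_growing w Ht) Hub) as [l Hl].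
  unfold Zsum. apply epsilon_spec. exists l. exact Hl.
Qed.

Lemma Zsum_lower w : (forall n, 0 <= tz w n <= 2 * (/2)^n) -> w 0%Z <= Zsum w.
Proof. intro Ht. pose proof (growing_ineq _ _ (tz_growing w Ht) (Zsum_cv w Ht) 0).
  simpl in H. exact H. Qed.

Lemma Zsum_nonneg w : (forall n, 0 <= tz w n <= 2 * (/2)^n) -> 0 <= Zsum w.
Proof. intro Ht. pose proof (growing_ineq _ _ (tz_growing w Ht) (Zsum_cv w Ht) 0).
  simpl in H. specialize (Ht 0%nat). lra. Qed.

Lemma Zsum_upper w M : (forall n, 0 <= tz w n <= 2 * (/2)^n) ->
  (forall n, (n < M)%nat -> tz w n = 0) -> Zsum w <= 4 * (/2)^M.
Proof. intros Ht Hz. pose proof (Zsum_cv w Ht) as Hc.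
  destruct (Rle_dec (Zsum w) (4 * (/2)^M)) as [|H]; auto. exfalso.
  destruct (Hc (Zsum w - 4 * (/2)^M) ltac:(lra)) as [N HN].
  specialize (HN (N + M)%nat ltac:(lia)). unfold R_dist in HN.
  destruct (geo_bound M (tz w) Ht Hz (N+M)) as [_ H2]. specialize (H2 ltac:(lia)).
  pose proof (pow_lt (/2) (S (N+M)) ltac:(lra)).
  apply Rabs_def2 in HN. lra.
Qed.
Module Dm2.
Import Coquelicot.Coquelicot.

Section Dm.
Variable V : Type.
Variable h : R.
Hypothesis Hh : h > 0.

Definition wf (f g : R -> V) (i : Z) : R :=
  (/ 4) ^ Z.to_nat (Z.abs i) * (/ h * Defs.RInt (delta f g) (IZR i * h) ((IZR i + 1) * h)).

Lemma int_ex (a b : Z -> V) s s' i :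
  ex_RInt (delta (rep h a s) (rep h b s')) (IZR i * h) ((IZR i + 1) * h).
Proof. replace ((IZR i + 1) * h) with (IZR i * h + h) by ring. apply Met.rep_ex; auto. Qed.

Lemma wf_bounds (a b : Z -> V) s s' i :
  0 <= wf (rep h a s) (rep h b s') i <= (/4) ^ Z.to_nat (Z.abs i).
Proof. unfold wf.
  pose proof (Met.int_bounds (rep h a s) (rep h b s') (IZR i * h) ((IZR i + 1) * h)
     ltac:(nra) (int_ex a b s s' i)) as [H1 H2].
  pose proof (pow_lt (/4) (Z.to_nat (Z.abs i)) ltac:(lra)).
  set (p := (/4) ^ Z.to_nat (Z.abs i)) in *.
  set (II := Defs.RInt _ _ _) in *.
  assert (0 <= / h * II <= 1).
  { split. apply Rmult_le_pos; [apply Rlt_le, Rinv_0_lt_compat; lra | lra].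
    apply Rmult_le_reg_l with h; [lra|]. rewrite <- Rmult_assoc, Rinv_r by lra. lra. }
  split; [apply Rmult_le_pos; lra|]. replace p with (p * 1) at 2 by ring.
  apply Rmult_le_compat_l; lra.
Qed.

Lemma tz_bounds (a b : Z -> V) s s' n :
  0 <= tz (wf (rep h a s) (rep h b s')) n <= 2 * (/2)^n.
Proof. unfold tz. destruct (Nat.eqb_spec n 0) as [->|Hn].
  - pose proof (wf_bounds a b s s' 0). simpl in *. lra.
  - pose proof (wf_bounds a b s s' (Z.of_nat n)) as H1.
    pose proof (wf_bounds a b s s' (- Z.of_nat n)) as H2.
    rewrite Z.abs_opp in H2. rewrite Z.abs_eq in H1, H2 by lia. rewrite Nat2Z.id in H1, H2.
    assert ((/4)^n <= (/2)^n) by (apply pow_incr; lra). lra.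
Qed.

Lemma d_nonneg (a b : Z -> V) s s' : 0 <= dmetric h (rep h a s) (rep h b s').
Proof. apply Zsum_nonneg. apply tz_bounds. Qed.

Lemma d_upper (a b : Z -> V) s s' (M : nat) :
  (forall u, - (INR M * h) <= u <= INR M * h -> rep h a s u = rep h b s' u) ->
  dmetric h (rep h a s) (rep h b s') <= 4 * (/2)^M.
Proof. intro Hag. apply Zsum_upper. apply tz_bounds.
  intros n Hn. assert (HnM : INR n + 1 <= INR M) by (rewrite <- S_INR; apply le_INR; lia).
  pose proof (pos_INR n).
  unfold tz. destruct (Nat.eqb_spec n 0) as [->|Hn0].
  - unfold wf. rewrite Met.int_zero. ring. simpl; lra. apply int_ex.
    intros x Hx. apply Hag. simpl in Hx, HnM. nra.
  - unfold wf. rewrite !Met.int_zero. ring.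
    all: try apply int_ex. all: rewrite ?opp_IZR, <- ?INR_IZR_INZ; try nra.
    all: intros x Hx; apply Hag; nra.
Qed.

Lemma d_lower (a b : Z -> V) s s' :
  (forall u, 0 < u < h -> rep h a s u <> rep h b s' u) ->
  1 <= dmetric h (rep h a s) (rep h b s').
Proof. intro Hd. eapply Rle_trans; [|apply Zsum_lower, tz_bounds].
  unfold wf. simpl. rewrite Met.int_full. field_simplify; lra. lra. apply int_ex.
  intros x Hx. apply Hd. lra.
Qed.
End Dm.
End Dm2.
Import Dm2.

Section G.
Variable V : Type.
Variable E : V -> V -> bool.
Variable C : V -> bool.

Fixpoint chain (u : V) (l : list V) : Prop :=
  match l with nil => True | w :: l' => E u w = true /\ C w = true /\ chain w l' end.

Fixpoint lst (u : V) (l : list V) : V :=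
  match l with nil => u | w :: l' => lst w l' end.

Lemma chain_app u l1 l2 : chain u (l1 ++ l2) <-> chain u l1 /\ chain (lst u l1) l2.
Proof. revert u; induction l1 as [|w l1 IH]; intro u; simpl. tauto.
  rewrite IH. tauto. Qed.

Lemma lst_app u l1 l2 : lst u (l1 ++ l2) = lst (lst u l1) l2.
Proof. revert u; induction l1; simpl; auto. Qed.

Lemma reach_C u v : reach_in V E C u v -> C u = true /\ C v = true.
Proof. induction 1; tauto. Qed.

Lemma reach_list u v : reach_in V E C u v -> exists l, l <> nil /\ chain u l /\ lst u l = v.
Proof. induction 1 as [u v Hu Hv He| u w v Hu He Hr [l [Hn [Hc Hl]]]].
  - exists (v :: nil). simpl. intuition congruence.
  - exists (w :: l). simpl. pose proof (reach_C _ _ Hr). intuition congruence.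
Qed.

Lemma chain_C u l : chain u l -> forall x, In x l -> C x = true.
Proof. revert u; induction l; simpl; intros u H x Hx; [tauto|].
  destruct Hx as [<-|Hx]; [tauto|]. apply (IHl a); tauto. Qed.

Lemma lst_C u l : C u = true -> chain u l -> C (lst u l) = true.
Proof. revert u; induction l; simpl; intros; [auto|]. apply IHl; tauto. Qed.

Lemma lst_split u l : l <> nil -> exists l', l = l' ++ lst u l :: nil.
Proof. revert u; induction l as [|w l IH]; intros u Hn; [congruence|].
  destruct l as [|w' l].
  - exists nil. reflexivity.
  - destruct (IH w ltac:(congruence)) as [l' Hl']. exists (w :: l'). simpl. simpl in Hl'.
    rewrite Hl' at 1. reflexivity.
Qed.

Lemma chain_nth u l d : chain u l -> forall j, (S j < length l)%nat ->
  E (nth j l d) (nth (S j) l d) = true.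
Proof. revert u; induction l as [|w l IH]; intros u Hc j Hj; simpl in Hj; [lia|].
  destruct Hc as [_ [_ Hc]]. destruct j as [|j].
  - destruct l; simpl in *; [lia|tauto].
  - simpl. apply (IH w Hc). lia. Qed.

Lemma chain_nth_C u l d : chain u l -> forall j, (j < length l)%nat -> C (nth j l d) = true.
Proof. intros Hc j Hj. apply (chain_C u l Hc). apply nth_In; auto. Qed.

Lemma chain_cons_nth u l : chain u l -> forall j, (j < length l)%nat ->
  E (nth j (u :: l) u) (nth (S j) (u :: l) u) = true /\ C (nth (S j) (u :: l) u) = true.
Proof. intros Hc j Hj. destruct j as [|j].
  - destruct l; simpl in *; [lia|tauto].
  - simpl. split. apply (chain_nth u l u Hc); lia. apply (chain_nth_C u l u Hc); lia. Qed.

Lemma nth_lst u l d : nth (length l) (u :: l) d = lst u l.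
Proof. revert u; induction l; intro u; [reflexivity|]. simpl length. simpl nth. apply IHl. Qed.

End G.

Lemma fl_mono r r' : r <= r' -> (fl r <= fl r')%Z.
Proof. intro H. pose proof (fl_spec r). pose proof (fl_spec r').
  destruct (Z_le_gt_dec (fl r) (fl r')) as [|Hg]; auto.
  apply Z.gt_lt, Zlt_le_succ in Hg. apply IZR_le in Hg. rewrite succ_IZR in Hg. lra. Qed.

Lemma fl_le_IZR r : IZR (fl r) <= r.
Proof. apply fl_spec. Qed.

Section R1.
Variable V : Type.
Variable E : V -> V -> bool.
Variable C : V -> bool.
Variable h : R.
Hypothesis Hh : h > 0.

Definition Cpath (a : Z -> V) := forall i, C (a i) = true /\ E (a i) (a (i+1)%Z) = true.

Lemma R1_to f : in_Delta_C V E h C f -> exists a s, Cpath a /\ f = rep h a s.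
Proof. intros [[x [t [[Hst Hed] ->]]] HC].
  set (a := fun i : Z => x (IZR i * h)).
  assert (Hx : forall u, x u = a (fl (u / h))).
  { intro u. unfold a. apply Hst. pose proof (fl_spec (u/h)) as [H1 H2].
    set (k := fl (u/h)) in *. assert (u = u / h * h) by (field; lra).
    split; nra. }
  exists a, t. split.
  - intro i. split.
    + unfold a. specialize (HC (IZR i * h - t)). replace (IZR i * h - t + t) with (IZR i * h) in HC by ring. auto.
    + unfold a. rewrite plus_IZR. apply Hed.
  - apply functional_extensionality. intro u. unfold rep. apply Hx.
Qed.

Lemma R1_from a s : Cpath a -> in_Delta_C V E h C (rep h a s).
Proof. intro Ha. split.
  - exists (rep h a 0), s. split.
    + split.
      * intros n t Ht. rewrite (rep_val h a 0 n t); auto; [|lra].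
        rewrite (rep_val h a 0 n (IZR n * h)); auto; lra.
      * intro i. rewrite (rep_val h a 0 i (IZR i * h)); auto; [|lra].
        rewrite (rep_val h a 0 (i+1) ((IZR i + 1) * h)); auto. apply Ha.
        rewrite plus_IZR. change (IZR 1) with 1. lra.
    + apply functional_extensionality. intro u. unfold rep. f_equal. f_equal. field. lra.
  - intro t. unfold rep. apply Ha.
Qed.
End R1.

Lemma min_nat (P : nat -> Prop) n : P n -> exists m, P m /\ forall k, P k -> (m <= k)%nat.
Proof. induction n as [n IH] using lt_wf_ind. intro Hn.
  destruct (classic (exists k, (k < n)%nat /\ P k)) as [[k [Hk Pk]]|Hno].
  - apply (IH k Hk Pk).
  - exists n. split; auto. intros k Pk. destruct (le_lt_dec n k); auto.
    exfalso; apply Hno; eauto. Qed.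

Section Cyc.
Variable V : Type.
Variable E : V -> V -> bool.
Variable C : V -> bool.
Variable v0 : V.
Hypothesis Hv0 : C v0 = true.
Hypothesis Hsucc : forall u, C u = true -> exists w, C w = true /\ E u w = true.
Hypothesis Huniq : forall u w1 w2, C u = true -> C w1 = true -> E u w1 = true ->
  C w2 = true -> E u w2 = true -> w1 = w2.
Hypothesis HSC : forall u v, C u = true -> C v = true -> reach_in V E C u v.

Definition nxt (u : V) : V := epsilon (inhabits v0) (fun w => C w = true /\ E u w = true).

Lemma nxt_spec u : C u = true -> C (nxt u) = true /\ E u (nxt u) = true.
Proof. intro Hu. unfold nxt. apply epsilon_spec. apply Hsucc; auto. Qed.

Lemma iter_C n : C (Nat.iter n nxt v0) = true.
Proof. induction n; simpl; auto. apply nxt_spec; auto. Qed.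

Lemma chain_iter u l : C u = true -> chain V E C u l -> lst V u l = Nat.iter (length l) nxt u.
Proof. revert u; induction l as [|w l IH]; intros u Hu Hc; simpl; auto.
  destruct Hc as [He [Hw Hc]].
  assert (w = nxt u) as ->. { destruct (nxt_spec u Hu) as [N1 N2]. apply (Huniq u); auto. }
  rewrite IH; auto. rewrite <- Nat.iter_succ_r. reflexivity. Qed.

Lemma reach_iter u v : C u = true -> C v = true -> exists k, (1 <= k)%nat /\ v = Nat.iter k nxt u.
Proof. intros Hu Hv. destruct (reach_list V E C u v (HSC u v Hu Hv)) as [l [Hn [Hc Hl]]].
  exists (length l). split. destruct l; [congruence| simpl; lia].
  rewrite <- Hl. apply chain_iter; auto. Qed.

Definition isper k := (1 <= k)%nat /\ Nat.iter k nxt v0 = v0.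

Lemma per_ex : exists P, isper P /\ forall k, isper k -> (P <= k)%nat.
Proof. destruct (reach_iter v0 v0 Hv0 Hv0) as [k [Hk Hi]].
  apply (min_nat isper k). split; auto. Qed.

Variable P : nat.
Hypothesis HP : isper P /\ forall k, isper k -> (P <= k)%nat.

Lemma iter_mulP q : Nat.iter (P * q) nxt v0 = v0.
Proof. induction q. rewrite Nat.mul_0_r. reflexivity.
  replace (P * S q)%nat with (P + P * q)%nat by lia. rewrite Nat.iter_add, IHq. apply HP. Qed.

Lemma iter_mod m : Nat.iter m nxt v0 = Nat.iter (m mod P) nxt v0.
Proof. destruct HP as [[HP1 _] _].
  assert (Hd := Nat.div_mod m P ltac:(lia)). transitivity (Nat.iter (P * (m / P) + m mod P) nxt v0). f_equal; exact Hd. rewrite Nat.add_comm, Nat.iter_add, iter_mulP. reflexivity. Qed.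

Lemma iter_inj m m' : (m < P)%nat -> (m' < P)%nat -> Nat.iter m nxt v0 = Nat.iter m' nxt v0 -> m = m'.
Proof. intros Hm Hm' Heq. destruct HP as [[HP1 HP2] Hmin].
  assert (forall x y, (x < y < P)%nat -> Nat.iter x nxt v0 = Nat.iter y nxt v0 -> False).
  { intros x y Hxy Hi. assert (isper (P - y + x)).
    { split. lia. rewrite Nat.iter_add, Hi, <- Nat.iter_add. replace (P - y + y)%nat with P by lia. auto. }
    specialize (Hmin _ H). lia. }
  destruct (lt_eq_lt_dec m m') as [[Hl|Hl]|Hl]; auto; exfalso; eauto. Qed.

Definition Pz := Z.of_nat P.
Definition a0 (i : Z) : V := Nat.iter (Z.to_nat (i mod Pz)) nxt v0.

Lemma Pz_pos : (0 < Pz)%Z.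
Proof. unfold Pz. destruct HP as [[HP1 _] _]. lia. Qed.

Lemma a0_nat k : a0 (Z.of_nat k) = Nat.iter k nxt v0.
Proof. unfold a0, Pz. rewrite Z2Nat.inj_mod by lia. rewrite !Nat2Z.id. symmetry. apply iter_mod. Qed.

Lemma a0_C i : C (a0 i) = true.
Proof. apply iter_C. Qed.

Lemma a0_succ i : a0 (i + 1) = nxt (a0 i).
Proof. unfold a0. pose proof Pz_pos. pose proof (Z.mod_pos_bound i Pz H).
  rewrite <- Z.add_mod_idemp_l by lia.
  destruct (Z.eq_dec (i mod Pz + 1) Pz) as [Heq|Hne].
  - rewrite Heq, Z.mod_same by lia. simpl. rewrite <- Nat.iter_succ.
    replace (S (Z.to_nat (i mod Pz))) with P by (unfold Pz in *; lia). symmetry. apply HP.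
  - rewrite Z.mod_small by lia. rewrite Z2Nat.inj_add by lia. rewrite Nat.add_comm. reflexivity.
Qed.

Lemma a0_per i : a0 (i + Pz) = a0 i.
Proof. unfold a0. f_equal. f_equal. rewrite <- (Z.mul_1_l Pz) at 1. apply Z_mod_plus_full. Qed.

Lemma a0_inj i j : a0 i = a0 j -> (i mod Pz = j mod Pz)%Z.
Proof. unfold a0. intro H. pose proof Pz_pos.
  pose proof (Z.mod_pos_bound i Pz H0). pose proof (Z.mod_pos_bound j Pz H0).
  apply iter_inj in H; try (unfold Pz in *; lia). Qed.

Lemma a0_res i j : (i mod Pz = j mod Pz)%Z -> a0 i = a0 j.
Proof. unfold a0. intro H. rewrite H. reflexivity. Qed.

Lemma a0_Cpath : Cpath V E C a0.
Proof. intro i. rewrite a0_succ. split. apply a0_C. apply nxt_spec, a0_C. Qed.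

Lemma C_in_a0 c : C c = true -> exists k, c = a0 k.
Proof. intro Hc. destruct (reach_iter v0 c Hv0 Hc) as [k [_ ->]]. exists (Z.of_nat k).
  symmetry. apply a0_nat. Qed.

Lemma Cpath_shift b : Cpath V E C b -> exists c, forall i, b i = a0 (i + c).
Proof. intro Hb. destruct (C_in_a0 (b 0%Z) (proj1 (Hb 0%Z))) as [c Hc].
  exists c.
  assert (Hs : forall i, b i = a0 (i + c) -> b (i+1)%Z = a0 (i + 1 + c)).
  { intros i Hi. replace (i + 1 + c)%Z with (i + c + 1)%Z by ring. rewrite a0_succ, <- Hi.
    destruct (Hb i) as [Hbi He]. destruct (nxt_spec _ Hbi).
    apply (Huniq (b i)); auto. apply Hb. }
  assert (Hp : forall i, b (i+1)%Z = a0 (i + 1 + c) -> b i = a0 (i + c)).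
  { intros i Hi. destruct (Hb i) as [Hbi He]. destruct (C_in_a0 _ Hbi) as [m Hm].
    rewrite Hm. apply a0_res.
    assert (nxt (b i) = b (i+1)%Z). { destruct (nxt_spec _ Hbi). apply (Huniq (b i)); auto. apply Hb. }
    rewrite Hm, <- a0_succ, Hi in H. apply a0_inj in H.
    pose proof Pz_pos.
    replace (i + c)%Z with ((i + 1 + c) + (-1))%Z by ring.
    replace m with ((m + 1) + (-1))%Z by ring.
    rewrite <- (Z.add_mod_idemp_l (i + 1 + c)) by lia. rewrite <- H.
    rewrite Z.add_mod_idemp_l by lia. reflexivity. }
  intro i. destruct (Z_le_gt_dec 0 i) as [Hi|Hi].
  - replace i with (Z.of_nat (Z.to_nat i)) by lia. induction (Z.to_nat i) as [|n IH].
    + simpl. auto.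
    + rewrite Nat2Z.inj_succ. unfold Z.succ. apply Hs. auto.
  - replace i with (- Z.of_nat (Z.to_nat (- i)))%Z by lia. induction (Z.to_nat (-i)) as [|n IH].
    + simpl. auto.
    + apply Hp. rewrite Nat2Z.inj_succ. replace (- Z.succ (Z.of_nat n) + 1)%Z with (- Z.of_nat n)%Z by lia. auto.
Qed.

End Cyc.

Section P1.
Variable V : Type.
Variable E : V -> V -> bool.
Variable C : V -> bool.
Variable v0 : V.
Hypothesis Hv0 : C v0 = true.
Hypothesis HSC : forall u v, C u = true -> C v = true -> reach_in V E C u v.

Lemma reach_first u v : reach_in V E C u v -> exists w, C w = true /\ E u w = true.
Proof. induction 1. eauto. exists w. split; auto. apply (reach_C V E C _ _ H1). Qed.

Lemma reach_last u v : reach_in V E C u v -> exists w, C w = true /\ E w v = true.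
Proof. induction 1; eauto. Qed.

Definition nxt1 (u : V) : V := epsilon (inhabits v0) (fun w => C w = true /\ E u w = true).
Definition prv (u : V) : V := epsilon (inhabits v0) (fun w => C w = true /\ E w u = true).

Lemma nxt1_spec u : C u = true -> C (nxt1 u) = true /\ E u (nxt1 u) = true.
Proof. intro Hu. unfold nxt1. apply epsilon_spec. apply (reach_first u u). auto. Qed.

Lemma prv_spec u : C u = true -> C (prv u) = true /\ E (prv u) u = true.
Proof. intro Hu. unfold prv. apply epsilon_spec. apply (reach_last u u). auto. Qed.

Fixpoint fw (u : V) (l : list V) (j : nat) : V :=
  match l with
  | nil => Nat.iter (S j) nxt1 u
  | w :: l' => match j with O => w | S j' => fw w l' j' end
  end.

Lemma iter_nxt1_C u n : C u = true -> C (Nat.iter n nxt1 u) = true.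
Proof. intro Hu. induction n; simpl; auto. apply nxt1_spec; auto. Qed.

Lemma fw_ok u l : C u = true -> chain V E C u l ->
  E u (fw u l 0) = true /\ forall j, C (fw u l j) = true /\ E (fw u l j) (fw u l (S j)) = true.
Proof. revert u; induction l as [|w l IH]; intros u Hu Hc; simpl.
  - split. apply nxt1_spec; auto. intro j. split. apply (iter_nxt1_C u (S j) Hu).
    apply nxt1_spec. apply (iter_nxt1_C u (S j) Hu).
  - destruct Hc as [He [Hw Hc]]. destruct (IH w Hw Hc) as [IH1 IH2]. split; auto.
    intros [|j]; simpl; auto. Qed.

Lemma fw_app u l1 l2 j : fw u (l1 ++ l2) (length l1 + j) = fw (lst V u l1) l2 j.
Proof. revert u; induction l1; intro u; simpl; auto. Qed.

Definition splice (a : Z -> V) (K : Z) (l : list V) (i : Z) : V :=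
  if Z.leb i K then a i else fw (a K) l (Z.to_nat (i - K - 1)).

Lemma splice_Cpath a K l : Cpath V E C a -> chain V E C (a K) l -> Cpath V E C (splice a K l).
Proof. intros Ha Hl. destruct (fw_ok (a K) l (proj1 (Ha K)) Hl) as [F0 F].
  intro i. unfold splice. destruct (Z.leb_spec i K); destruct (Z.leb_spec (i+1) K).
  - apply Ha.
  - assert (i = K) by lia. subst. split. apply Ha.
    replace (Z.to_nat (K + 1 - K - 1)) with O by lia. auto.
  - lia.
  - split. apply F. replace (Z.to_nat (i + 1 - K - 1)) with (S (Z.to_nat (i - K - 1))) by lia. apply F.
Qed.

Fixpoint blk (a : Z -> V) (z : Z) (n : nat) : list V :=
  match n with O => nil | S n' => a (z + 1)%Z :: blk a (z + 1)%Z n' end.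

Lemma blk_len a z n : length (blk a z n) = n.
Proof. revert z; induction n; simpl; auto. Qed.

Lemma blk_chain a z n : Cpath V E C a -> chain V E C (a z) (blk a z n).
Proof. revert z; induction n; intros z Ha; simpl; auto. split. apply Ha. split. apply Ha. auto. Qed.

Lemma blk_lst a z n : lst V (a z) (blk a z n) = a (z + Z.of_nat n)%Z.
Proof. revert z; induction n; intro z; simpl. f_equal; lia. rewrite IHn. f_equal; lia. Qed.

Lemma blk_nth a z n j d : (j <= n)%nat -> nth j (a z :: blk a z n) d = a (z + Z.of_nat j)%Z.
Proof. revert z j; induction n; intros z j Hj.
  - assert (j = O) by lia. subst. simpl. f_equal; lia.
  - destruct j as [|j]. simpl. f_equal; lia.
    change (nth (S j) (a z :: blk a z (S n)) d) with (nth j (a (z+1)%Z :: blk a (z+1)%Z n) d).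
    rewrite IHn by lia. f_equal; lia. Qed.

Definition pp (z : Z) (u : V) (cyc : list V) (i : Z) : V :=
  nth (Z.to_nat ((i - z) mod Z.of_nat (length cyc))) (u :: cyc) u.

Lemma pp_Cpath z u cyc : C u = true -> chain V E C u cyc -> lst V u cyc = u -> cyc <> nil ->
  Cpath V E C (pp z u cyc).
Proof. intros Hu Hc Hl Hn. set (P := Z.of_nat (length cyc)).
  assert (HP : (0 < P)%Z) by (unfold P; destruct cyc; [congruence|simpl; lia]).
  intro i. unfold pp. fold P.
  pose proof (Z.mod_pos_bound (i - z) P HP) as Hm.
  set (m := ((i - z) mod P)%Z) in *.
  assert (Hnext : nth (Z.to_nat ((i + 1 - z) mod P)) (u :: cyc) u = nth (S (Z.to_nat m)) (u :: cyc) u).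
  { replace (i + 1 - z)%Z with ((i - z) + 1)%Z by ring. rewrite <- Z.add_mod_idemp_l by lia. fold m.
    destruct (Z.eq_dec (m + 1) P) as [Heq|Hne].
    - rewrite Heq, Z.mod_same by lia. simpl Z.to_nat.
      replace (S (Z.to_nat m)) with (length cyc) by (unfold P in *; lia).
      rewrite nth_lst. simpl. auto.
    - rewrite Z.mod_small by lia. f_equal. lia. }
  rewrite Hnext. destruct (chain_cons_nth V E C u cyc Hc (Z.to_nat m) ltac:(unfold P in *; lia)) as [H1 H2].
  split; auto. destruct (Z.to_nat m) as [|k] eqn:Ek. simpl; auto.
  apply (chain_cons_nth V E C u cyc Hc k). unfold P in *; lia.
Qed.

Lemma pp_per z u cyc i : pp z u cyc (i + Z.of_nat (length cyc)) = pp z u cyc i.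
Proof. unfold pp. f_equal. f_equal.
  replace (i + Z.of_nat (length cyc) - z)%Z with ((i - z) + 1 * Z.of_nat (length cyc))%Z by ring.
  apply Z_mod_plus_full. Qed.

End P1.

Lemma eps_M eps : eps > 0 -> exists M : nat, 4 * (/2)^M < eps.
Proof. intro He. destruct (pow_lt_1_zero (/2) ltac:(rewrite Rabs_pos_eq; lra) (eps/4) ltac:(lra)) as [N HN].
  exists N. specialize (HN N (le_n N)). rewrite Rabs_pos_eq in HN by (apply pow_le; lra). lra. Qed.

Lemma rep_per {V} h (b : Z -> V) s P : h > 0 -> (forall i, b (i + P)%Z = b i) ->
  rep h b (s + IZR P * h) = rep h b s.
Proof. intros Hh Hb. apply functional_extensionality. intro u. unfold rep.
  replace ((u + (s + IZR P * h)) / h) with ((u + s) / h + IZR P) by (field; lra).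
  rewrite fl_shift. apply Hb. Qed.

Lemma div_mono a b h : h > 0 -> a <= b -> a / h <= b / h.
Proof. intros Hh Hab. unfold Rdiv. apply Rmult_le_compat_r; [left; apply Rinv_0_lt_compat; lra | lra]. Qed.

Section SD.
Variable V : Type.
Variable E : V -> V -> bool.
Variable C : V -> bool.
Variable v0 : V.
Hypothesis Hv0 : C v0 = true.
Hypothesis HSC : forall u v, C u = true -> C v = true -> reach_in V E C u v.
Variable h : R.
Hypothesis Hh : h > 0.

Lemma sens v w1 w2 : C v = true -> C w1 = true -> C w2 = true -> E v w1 = true -> E v w2 = true ->
  w1 <> w2 -> sensitive (in_Delta_C V E h C) (dmetric h) psi.
Proof. intros Hv Hw1 Hw2 He1 He2 Hne. exists (1/2). split; [lra|].
  intros f Hf eps Heps. destruct (R1_to V E C h Hh f Hf) as [a [s [Ha ->]]].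
  destruct (eps_M eps Heps) as [M HM].
  set (K := fl ((INR M * h + s) / h)).
  destruct (reach_list V E C _ _ (HSC (a K) v (proj1 (Ha K)) Hv)) as [l1 [Hn1 [Hc1 Hl1]]].
  set (j0 := (K + 1 + Z.of_nat (length l1))%Z).
  set (w := if excluded_middle_informative (a j0 = w1) then w2 else w1).
  assert (Hw : C w = true /\ E v w = true /\ w <> a j0).
  { unfold w. destruct excluded_middle_informative as [e|n].
    - rewrite e. auto.
    - auto. }
  set (b := splice V E C v0 a K (l1 ++ w :: nil)).
  assert (Hb : Cpath V E C b).
  { apply splice_Cpath; auto. apply chain_app. split; auto. rewrite Hl1. simpl. tauto. }
  assert (Hbj : b j0 = w).
  { unfold b, splice. destruct (Z.leb_spec j0 K); [unfold j0 in *; lia|].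
    replace (Z.to_nat (j0 - K - 1)) with (length l1 + 0)%nat by (unfold j0; lia).
    rewrite fw_app. reflexivity. }
  assert (HbK : forall i, (i <= K)%Z -> b i = a i).
  { intros i Hi. unfold b, splice. destruct (Z.leb_spec i K); [auto|lia]. }
  exists (rep h b s), (IZR j0 * h - s). split; [apply R1_from; auto|]. split.
  - eapply Rle_lt_trans; [|exact HM]. apply d_upper; auto. intros u Hu. unfold rep. symmetry. apply HbK.
    unfold K. apply fl_mono. apply div_mono; lra.
  - split.
    + pose proof (fl_spec ((INR M * h + s)/h)) as [_ H2]. fold K in H2.
      assert (IZR K + 1 <= IZR j0).
      { unfold j0. rewrite !plus_IZR, <- INR_IZR_INZ. pose proof (pos_INR (length l1)).
        change (IZR 1) with 1. lra. }
      set (r := (INR M * h + s) / h) in *.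
      assert (Er : INR M * h + s = r * h) by (unfold r; field; lra).
      pose proof (pos_INR M).
      assert (r * h < IZR j0 * h) by (apply Rmult_lt_compat_r; lra). nra.
    + rewrite !psi_rep. apply Rlt_le_trans with 1; [lra|]. apply d_lower; auto. intros u Hu.
      rewrite (rep_val h a _ j0 u), (rep_val h b _ j0 u) by (auto; lra). rewrite Hbj.
      intro Heq. apply Hw. auto.
Qed.

Lemma dense : dense_periodic (in_Delta_C V E h C) (dmetric h) psi.
Proof. intros f Hf eps Heps. destruct (R1_to V E C h Hh f Hf) as [a [s [Ha ->]]].
  destruct (eps_M eps Heps) as [M HM].
  pose proof (pos_INR M).
  set (lo := fl ((- (INR M * h) + s)/h)). set (hi := fl ((INR M * h + s)/h)).
  assert (Hlh : (lo <= hi)%Z) by (apply fl_mono; apply div_mono; nra).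
  set (n := Z.to_nat (hi - lo)).
  destruct (reach_list V E C (a hi) (a lo) (HSC _ _ (proj1 (Ha hi)) (proj1 (Ha lo)))) as [l1 [Hn1 [Hc1 Hl1]]].
  set (cyc := blk V a lo n ++ l1).
  assert (Hhi : (lo + Z.of_nat n)%Z = hi) by (unfold n; lia).
  assert (Hcc : chain V E C (a lo) cyc).
  { apply chain_app. split. apply blk_chain; auto. rewrite blk_lst, Hhi. auto. }
  assert (Hcl : lst V (a lo) cyc = a lo). { unfold cyc. rewrite lst_app, blk_lst, Hhi. auto. }
  assert (Hlen : (length cyc = n + length l1)%nat) by (unfold cyc; rewrite length_app, blk_len; auto).
  assert (Hl1p : (1 <= length l1)%nat) by (destruct l1; [congruence|simpl; lia]).
  assert (Hcn : cyc <> nil) by (intro Hc; rewrite Hc in Hlen; simpl in Hlen; lia).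
  set (pb := pp V lo (a lo) cyc).
  assert (Hpb : Cpath V E C pb) by (apply pp_Cpath; auto; apply Ha).
  assert (Hag : forall i, (lo <= i <= hi)%Z -> pb i = a i).
  { intros i Hi. unfold pb, pp. rewrite Z.mod_small by lia.
    unfold cyc. rewrite app_comm_cons. rewrite app_nth1 by (simpl; rewrite blk_len; lia).
    rewrite blk_nth by lia. f_equal; lia. }
  exists (rep h pb s). split; [apply R1_from; auto|]. split.
  - exists (IZR (Z.of_nat (length cyc)) * h). split.
    + apply Rmult_lt_0_compat; auto. apply IZR_lt. lia.
    + rewrite psi_rep. apply rep_per; auto. intro i. apply pp_per.
  - eapply Rle_lt_trans; [|exact HM]. apply d_upper; auto. intros u Hu. unfold rep. symmetry. apply Hag.
    split; apply fl_mono; apply div_mono; lra.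
Qed.
End SD.

Lemma nat_gt r : exists N : nat, r < INR N.
Proof. destruct (archimed r) as [H1 _]. exists (Z.to_nat (up r)).
  apply Rlt_le_trans with (IZR (up r)); [lra|]. rewrite INR_IZR_INZ. apply IZR_le. lia. Qed.

Section TR.
Variable V : Type.
Variable E : V -> V -> bool.
Variable C : V -> bool.
Variable v0 : V.
Hypothesis Hv0 : C v0 = true.
Hypothesis HSC : forall u v, C u = true -> C v = true -> reach_in V E C u v.
Variable enum : list V.
Hypothesis Henum : forall v, In v enum.
Variable h : R.
Hypothesis Hh : h > 0.

Fixpoint allL (n : nat) : list (list V) :=
  match n with O => nil :: nil | S n' => flat_map (fun x => map (cons x) (allL n')) enum end.

Lemma allL_in l : In l (allL (length l)).
Proof. induction l as [|x l IH]; simpl; auto. apply in_flat_map. exists x. split; auto.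
  apply in_map; auto. Qed.

Definition route (e u : V) : list V :=
  epsilon (inhabits nil) (fun r => r <> nil /\ chain V E C e r /\ lst V e r = u).

Lemma route_spec e u : C e = true -> C u = true ->
  route e u <> nil /\ chain V E C e (route e u) /\ lst V e (route e u) = u.
Proof. intros. unfold route. apply epsilon_spec. apply reach_list. auto. Qed.

Definition valid (l : list V) : Prop :=
  match l with nil => False | u :: w => C u = true /\ chain V E C u w end.

Definition step (e : V) (l : list V) : list V :=
  match l with
  | nil => nil
  | u :: w => if excluded_middle_informative (C u = true /\ chain V E C u w) then route e u ++ w else nil
  end.

Lemma step_chain e l : C e = true -> chain V E C e (step e l).
Proof. intro He. destruct l as [|u w]; simpl; auto.
  destruct excluded_middle_informative as [[Hu Hw]|]; simpl; auto.
  destruct (route_spec e u He Hu) as [_ [Hc Hl]]. apply chain_app. rewrite Hl. auto. Qed.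

Fixpoint foldseg (e : V) (ls : list (list V)) : list V :=
  match ls with nil => nil | l :: ls' => step e l ++ foldseg (lst V e (step e l)) ls' end.

Lemma foldseg_chain ls : forall e, C e = true -> chain V E C e (foldseg e ls).
Proof. induction ls; intros e He; simpl; auto. apply chain_app. split. apply step_chain; auto.
  apply IHls. apply (lst_C V E C); auto. apply step_chain; auto. Qed.

Lemma foldseg_app ls1 ls2 e :
  foldseg e (ls1 ++ ls2) = foldseg e ls1 ++ foldseg (lst V e (foldseg e ls1)) ls2.
Proof. revert e; induction ls1; intro e; simpl; auto. rewrite IHls1, app_assoc, lst_app. reflexivity. Qed.

Lemma step_occ e l : C e = true -> valid l -> exists A, step e l = A ++ l.
Proof. intros He Hv. destruct l as [|u w]; [destruct Hv|]. simpl.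
  destruct excluded_middle_informative as [Hx|Hx]; [|contradiction].
  destruct Hx as [Hu Hw]. destruct (route_spec e u He Hu) as [Hn [Hc Hl]].
  destruct (lst_split V e (route e u) Hn) as [r' Hr']. rewrite Hl in Hr'.
  exists r'. rewrite Hr', <- app_assoc. reflexivity. Qed.

Lemma foldseg_occ ls l e : C e = true -> In l ls -> valid l -> exists A B, foldseg e ls = A ++ l ++ B.
Proof. intros He Hin Hv. destruct (in_split _ _ Hin) as [ls1 [ls2 ->]].
  rewrite foldseg_app. simpl. set (e' := lst V e (foldseg e ls1)).
  assert (He' : C e' = true) by (apply (lst_C V E C); auto; apply foldseg_chain; auto).
  destruct (step_occ e' l He' Hv) as [A HA]. rewrite HA.
  exists (foldseg e ls1 ++ A), (foldseg (lst V e' (A ++ l)) ls2). rewrite !app_assoc. reflexivity. Qed.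

Definition nx := nxt1 V E C v0.

Fixpoint pre (n : nat) : list V :=
  match n with
  | O => nil
  | S n' => pre n' ++ nx (lst V v0 (pre n')) :: foldseg (nx (lst V v0 (pre n'))) (allL n')
  end.

Lemma pre_chain n : chain V E C v0 (pre n).
Proof. induction n; simpl; auto. apply chain_app. split; auto.
  assert (He : C (lst V v0 (pre n)) = true) by (apply (lst_C V E C); auto).
  destruct (nxt1_spec V E C v0 HSC _ He) as [H1 H2]. simpl. split; auto. split; auto.
  apply foldseg_chain; auto. Qed.

Lemma pre_len n : (n <= length (pre n))%nat.
Proof. induction n; simpl; [lia|]. rewrite length_app. simpl. lia. Qed.

Lemma pre_prefix m k : exists t, pre (m + k) = pre m ++ t.
Proof. induction k. exists nil. rewrite Nat.add_0_r, app_nil_r. auto.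
  destruct IHk as [t Ht]. rewrite Nat.add_succ_r. simpl. rewrite Ht.
  eexists. rewrite <- app_assoc. reflexivity. Qed.

Lemma pre_nth m n j : (j < length (pre m))%nat -> (j < length (pre n))%nat ->
  nth j (pre m) v0 = nth j (pre n) v0.
Proof. intros Hm Hn. destruct (le_lt_dec m n) as [Hle|Hlt].
  - destruct (pre_prefix m (n - m)) as [t Ht]. replace (m + (n - m))%nat with n in Ht by lia.
    rewrite Ht, app_nth1; auto.
  - destruct (pre_prefix n (m - n)) as [t Ht]. replace (n + (m - n))%nat with m in Ht by lia.
    rewrite Ht, app_nth1; auto. Qed.

Definition q (j : nat) : V := nth j (pre (S j)) v0.

Lemma q_eq j n : (j < length (pre n))%nat -> q j = nth j (pre n) v0.
Proof. intro H. unfold q. apply pre_nth; auto. pose proof (pre_len (S j)). lia. Qed.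

Lemma q_C j : C (q j) = true.
Proof. unfold q. apply (chain_nth_C V E C v0 _ v0 (pre_chain (S j))). pose proof (pre_len (S j)). lia. Qed.

Lemma q_E j : E (q j) (q (S j)) = true.
Proof. pose proof (pre_len (S (S j))).
  rewrite (q_eq j (S (S j))) by lia. rewrite (q_eq (S j) (S (S j))) by lia.
  apply (chain_nth V E C v0 _ v0 (pre_chain _)). lia. Qed.

Lemma q_occ l : valid l -> exists p, forall j, (j < length l)%nat -> q (p + j) = nth j l v0.
Proof. intro Hv. set (n := length l).
  set (e := lst V v0 (pre n)).
  assert (He : C e = true) by (apply (lst_C V E C); auto; apply pre_chain).
  destruct (nxt1_spec V E C v0 HSC _ He) as [Hx _].
  destruct (foldseg_occ (allL n) l (nx e) Hx (allL_in l) Hv) as [A [B HAB]].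
  exists (length (pre n) + 1 + length A)%nat. intros j Hj.
  assert (Hpre : pre (S n) = pre n ++ nx e :: A ++ l ++ B) by (simpl; fold e; rewrite HAB; reflexivity).
  rewrite (q_eq _ (S n)).
  - rewrite Hpre. rewrite app_nth2 by lia.
    replace (length (pre n) + 1 + length A + j - length (pre n))%nat with (S (length A + j)) by lia.
    simpl nth. rewrite app_nth2 by lia. replace (length A + j - length A)%nat with j by lia.
    rewrite app_nth1; auto.
  - rewrite Hpre. rewrite length_app. simpl. rewrite !length_app. fold n. lia.
Qed.

Definition pv := prv V E C v0.

Lemma iter_pv_C k : C (Nat.iter k pv (q 0)) = true.
Proof. induction k; simpl. apply q_C. apply prv_spec; auto. Qed.

Definition abi (i : Z) : V :=
  if Z.leb 0 i then q (Z.to_nat i) else Nat.iter (Z.to_nat (- i)) pv (q 0).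

Lemma abi_Cpath : Cpath V E C abi.
Proof. intro i. unfold abi. destruct (Z.leb_spec 0 i); destruct (Z.leb_spec 0 (i+1)).
  - split. apply q_C. replace (Z.to_nat (i+1)) with (S (Z.to_nat i)) by lia. apply q_E.
  - lia.
  - split. apply iter_pv_C. assert (i = -1)%Z by lia. subst. simpl.
    apply prv_spec; auto. apply q_C.
  - split. apply iter_pv_C. replace (Z.to_nat (- i)) with (S (Z.to_nat (- (i+1)))) by lia.
    simpl. apply prv_spec; auto. apply iter_pv_C.
Qed.

Lemma trans : top_transitive (in_Delta_C V E h C) (dmetric h) psi.
Proof. exists (rep h abi 0). split; [apply R1_from; auto; apply abi_Cpath|].
  intro y. split; [intros [Hy _]; auto|]. intro Hy. split; auto.
  destruct (R1_to V E C h Hh y Hy) as [b [s [Hb ->]]].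
  set (lk := fun k : nat => b (- Z.of_nat k)%Z :: blk V b (- Z.of_nat k)%Z (2 * k)).
  assert (Hlk : forall k, valid (lk k)).
  { intro k. simpl. split. apply Hb. apply blk_chain. auto. }
  set (pk := fun k : nat => epsilon (inhabits 0%nat)
     (fun p => forall j, (j < length (lk k))%nat -> q (p + j) = nth j (lk k) v0)).
  assert (Hpk : forall k j, (j <= 2 * k)%nat -> q (pk k + j) = b (- Z.of_nat k + Z.of_nat j)%Z).
  { intros k j Hj. unfold pk. rewrite (epsilon_spec (inhabits 0%nat) _ (q_occ (lk k) (Hlk k))).
    - unfold lk. apply blk_nth. auto.
    - unfold lk. simpl. rewrite blk_len. lia. }
  exists (fun k => s + INR (pk k + k) * h). split.
  - intro M0. destruct (nat_gt ((M0 - s) / h)) as [N HN]. exists N. intros n Hn.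
    assert (INR N <= INR (pk n + n)) by (apply le_INR; lia).
    set (r := (M0 - s) / h) in *. assert (M0 - s = r * h) by (unfold r; field; lra).
    assert (r * h < INR (pk n + n) * h) by (apply Rmult_lt_compat_r; lra). lra.
  - intros eps Heps. destruct (eps_M eps Heps) as [M HM].
    destruct (nat_gt (INR M + Rabs s / h + 1)) as [N HN]. exists N. intros k Hk.
    unfold R_dist. rewrite Rminus_0_r. rewrite psi_rep.
    rewrite Rabs_pos_eq by (apply d_nonneg; auto).
    eapply Rle_lt_trans; [|exact HM]. apply d_upper; auto. intros u Hu. unfold rep.
    set (r := (u + s) / h). set (c := Rabs s / h) in *.
    assert (Er : u + s = r * h) by (unfold r; field; lra).
    assert (Ec : Rabs s = c * h) by (unfold c; field; lra).
    pose proof (Rle_abs s). pose proof (Rle_abs (- s)). rewrite Rabs_Ropp in *.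
    assert (Hr1 : r <= INR M + c).
    { apply Rmult_le_reg_r with h; auto. nra. }
    assert (Hr2 : - INR M - c <= r).
    { apply Rmult_le_reg_r with h; auto. nra. }
    assert (HkN : INR N <= INR k) by (apply le_INR; lia).
    pose proof (fl_spec r) as [F1 F2]. set (idx := fl r) in *.
    assert (Hk2 : INR k = IZR (Z.of_nat k)) by apply INR_IZR_INZ.
    assert (Hi1 : (idx < Z.of_nat k)%Z) by (apply lt_IZR; lra).
    assert (Hi2 : (- Z.of_nat k < idx)%Z) by (apply lt_IZR; rewrite opp_IZR; lra).
    replace ((u + (0 + (s + INR (pk k + k) * h))) / h) with (r + IZR (Z.of_nat (pk k + k)))
      by (unfold r; rewrite <- INR_IZR_INZ; field; lra).
    rewrite fl_shift. fold idx. unfold abi. destruct (Z.leb_spec 0 (idx + Z.of_nat (pk k + k))); [|lia].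
    replace (Z.to_nat (idx + Z.of_nat (pk k + k))) with (pk k + Z.to_nat (idx + Z.of_nat k))%nat by lia.
    rewrite Hpk by lia. f_equal. lia.
Qed.
End TR.

Theorem mainTheorem13
  (V : Type) (enum : list V) (Henum_nodup : NoDup enum) (Henum_full : forall v : V, In v enum)
  (E : V -> V -> bool) (h : R) (Hh : h > 0) (C : V -> bool) (HC : is_SCC V E C) :
  ((exists v, C v = true /\ (outdeg_in V E enum C v > 1)%nat) ->
     chaotic (in_Delta_C V E h C) (dmetric h) psi) /\
  ((forall v, C v = true -> outdeg_in V E enum C v = 1%nat) ->
     exists f, in_Delta_C V E h C f /\ periodic_point psi f /\
       forall g, in_Delta_C V E h C g <-> exists t, g = psi t f).
Proof.
  destruct HC as [[[v0 Hv0] HSC] _]. split.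
  - intros [v [Hv Hd]]. unfold outdeg_in in Hd.
    pose proof (NoDup_filter (fun w => (C w && E v w)%bool) Henum_nodup) as Hnd.
    destruct (filter (fun w => (C w && E v w)%bool) enum) as [|w1 [|w2 rest]] eqn:Hf; simpl in Hd; try lia.
    assert (Hi1 : In w1 (filter (fun w => (C w && E v w)%bool) enum)) by (rewrite Hf; simpl; auto).
    assert (Hi2 : In w2 (filter (fun w => (C w && E v w)%bool) enum)) by (rewrite Hf; simpl; auto).
    apply filter_In in Hi1 as [_ Hi1]. apply filter_In in Hi2 as [_ Hi2].
    apply andb_prop in Hi1 as [Hc1 He1]. apply andb_prop in Hi2 as [Hc2 He2].
    assert (Hne : w1 <> w2). { inversion Hnd. intro; subst. simpl in *. tauto. }
    split; [|split].
    + apply (sens V E C v0 HSC h Hh v w1 w2); auto.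
    + apply (dense V E C HSC h Hh).
    + apply (trans V E C v0 Hv0 HSC enum Henum_full h Hh).
  - intros Hdeg.
    assert (Hsucc : forall u, C u = true -> exists w, C w = true /\ E u w = true).
    { intros u Hu. destruct (reach_list V E C u u (HSC u u Hu Hu)) as [l [Hn [Hc _]]].
      destruct l as [|w l]; [congruence|]. destruct Hc as [He [Hw _]]. eauto. }
    assert (Huniq : forall u w1 w2, C u = true -> C w1 = true -> E u w1 = true ->
      C w2 = true -> E u w2 = true -> w1 = w2).
    { intros u w1 w2 Hu Hc1 He1 Hc2 He2. specialize (Hdeg u Hu). unfold outdeg_in in Hdeg.
      assert (Hi1 : In w1 (filter (fun w => (C w && E u w)%bool) enum)) by (apply filter_In; rewrite Hc1, He1; auto).
      assert (Hi2 : In w2 (filter (fun w => (C w && E u w)%bool) enum)) by (apply filter_In; rewrite Hc2, He2; auto).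
      destruct (filter (fun w => (C w && E u w)%bool) enum) as [|z [|z' r]]; simpl in Hdeg; try lia.
      simpl in Hi1, Hi2. intuition congruence. }
    destruct (per_ex V E C v0 Hv0 Hsucc Huniq HSC) as [P HP].
    set (a := a0 V E C v0 P).
    assert (Ha : Cpath V E C a) by (apply (a0_Cpath V E C v0 Hv0 Hsucc P HP)).
    exists (rep h a 0). split; [apply R1_from; auto|]. split.
    + exists (IZR (Pz P) * h). split.
      * apply Rmult_lt_0_compat; auto. apply IZR_lt. apply (Pz_pos V E C v0 P HP).
      * rewrite psi_rep. apply rep_per; auto. intro i. apply (a0_per V E C v0 P).
    + intro g. split.
      * intro Hg. destruct (R1_to V E C h Hh g Hg) as [b [s [Hb ->]]].
        destruct (Cpath_shift V E C v0 Hv0 Hsucc Huniq HSC P HP b Hb) as [c Hc].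
        exists (s + IZR c * h). rewrite psi_rep. apply functional_extensionality. intro u.
        unfold rep. rewrite Hc. fold a. f_equal. rewrite <- fl_shift. f_equal. field. lra.
      * intros [t ->]. rewrite psi_rep. apply R1_from; auto.
Qed.
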